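(* Let $J^r:\mathbb{R}^n\to\mathbb{R}^k$ be twice continuously differentiable and $\epsilon\in[0,\infty)^k$. Let $\bar u\in\varphi^{-1}(0)$ be such that problem $(\mathrm{P}_u)$ with $u=\bar u$ has a unique solution $\bar\alpha\in\Delta_k$ and $\bar\alpha_i>0$ for all $i\in\{1,\dots,k\}$, and suppose that $(\mathrm{P}_u)$ is uniquely solvable for all $u$ in a neighborhood of $\bar u$. Then there is an open set $U\subseteq\mathbb{R}^n$ with $\bar u\in U$ such that $\varphi|_U$ is continuously differentiable.
   Context: $\Delta_k:=\{\alpha\in[0,\infty)^k:\sum_{i=1}^k\alpha_i=1\}$. $DJ^r(u)\in\mathbb{R}^{k\times n}$ is the Jacobian of $J^r$. For $u\in\mathbb{R}^n$ let $\omega_u(\alpha):=\|DJ^r(u)^\top\alpha\|_2^2-(\alpha^\top\epsilon)^2=\alpha^\top\big(DJ^r(u)DJ^r(u)^\top-\epsilon\epsilon^\top\big)\alpha$, and let $(\mathrm{P}_u)$ denote the problem $\min_{\alpha\in\Delta_k}\omega_u(\alpha)$ (a ''solution'' is a minimizer). Define $\varphi:\mathbb{R}^n\to\mathbb{R}$, $\varphi(u):=\min_{\alpha\in\Delta_k}\omega_u(\alpha)$. *)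

(* Defs.v *)
From mathcomp Require Import ssreflect ssrfun ssrbool eqtype ssrnat seq fintype bigop.
From Stdlib Require Import Reals ClassicalEpsilon.
Set Implicit Arguments. Unset Strict Implicit. Unset Printing Implicit Defensive.
Local Open Scope R_scope.

Definition vec (n : nat) := 'I_n -> R.

Definition vsum (n : nat) (f : 'I_n -> R) : R := \big[Rplus/0]_(i < n) f i.
Definition dot (n : nat) (x y : vec n) : R := vsum (fun i => x i * y i).
Definition vnorm (n : nat) (x : vec n) : R := sqrt (dot x x).
Definition vadd (n : nat) (x y : vec n) : vec n := fun i => x i + y i.
Definition vsub (n : nat) (x y : vec n) : vec n := fun i => x i - y i.

Definition is_open (n : nat) (U : vec n -> Prop) : Prop :=
  forall u, U u -> exists r, 0 < r /\ forall v, vnorm (vsub v u) < r -> U v.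

Definition continuous_on (n : nat) (U : vec n -> Prop) (g : vec n -> R) : Prop :=
  forall u, U u -> forall eps, 0 < eps -> exists delta, 0 < delta /\
    forall v, U v -> vnorm (vsub v u) < delta -> Rabs (g v - g u) < eps.

Definition has_grad (n : nat) (g : vec n -> R) (u d : vec n) : Prop :=
  forall eps, 0 < eps -> exists delta, 0 < delta /\
    forall h, vnorm h < delta ->
      Rabs (g (vadd u h) - g u - dot d h) <= eps * vnorm h.

Definition C1_on (n : nat) (U : vec n -> Prop) (g : vec n -> R) : Prop :=
  exists dg : vec n -> vec n,
    (forall u, U u -> has_grad g u (dg u)) /\
    (forall i, continuous_on U (fun u => dg u i)).

Definition full (n : nat) : vec n -> Prop := fun _ => True.

Definition is_jacobian (n k : nat) (J : vec n -> vec k) (DJ : vec n -> 'I_k -> 'I_n -> R) : Prop :=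
  forall u j, has_grad (fun v => J v j) u (fun i => DJ u j i).

Definition C2_with_jacobian (n k : nat) (J : vec n -> vec k) (DJ : vec n -> 'I_k -> 'I_n -> R) : Prop :=
  is_jacobian J DJ /\ forall j i, C1_on (@full n) (fun u => DJ u j i).

Definition in_simplex (k : nat) (a : vec k) : Prop :=
  (forall i, 0 <= a i) /\ vsum a = 1.

(* omega_u(alpha) = || DJ(u)^T alpha ||^2 - (alpha^T eps)^2 *)
Definition omega (n k : nat) (DJ : vec n -> 'I_k -> 'I_n -> R) (eps : vec k)
  (u : vec n) (a : vec k) : R :=
  vsum (fun i : 'I_n => (vsum (fun j : 'I_k => DJ u j i * a j)) ^ 2) - (dot a eps) ^ 2.

Definition is_solution (n k : nat) (DJ : vec n -> 'I_k -> 'I_n -> R) (eps : vec k)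
  (u : vec n) (a : vec k) : Prop :=
  in_simplex a /\ forall b, in_simplex b -> omega DJ eps u a <= omega DJ eps u b.

Definition uniquely_solvable (n k : nat) (DJ : vec n -> 'I_k -> 'I_n -> R) (eps : vec k)
  (u : vec n) : Prop :=
  exists a, is_solution DJ eps u a /\
    forall b, is_solution DJ eps u b -> forall i, b i = a i.

Definition is_min_value (n k : nat) (DJ : vec n -> 'I_k -> 'I_n -> R) (eps : vec k)
  (u : vec n) (m : R) : Prop :=
  (exists a, is_solution DJ eps u a /\ omega DJ eps u a = m).

(* phi(u) = min_{alpha in Delta_k} omega_u(alpha) (the minimum exists by compactness
   whenever k >= 1; chosen by classical epsilon) *)
Definition phi (n k : nat) (DJ : vec n -> 'I_k -> 'I_n -> R) (eps : vec k) (u : vec n) : R :=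
  epsilon (inhabits 0) (is_min_value DJ eps u).

(* Main.v *)
Require Import Defs.
From HB Require Import structures.
From mathcomp Require Import ssreflect ssrfun ssrbool eqtype ssrnat seq fintype bigop.
From Stdlib Require Import Reals Lra Lia Psatz ClassicalEpsilon FunctionalExtensionality Classical.
From mathcomp Require Import zify.
Local Open Scope R_scope.
HB.instance Definition _ := Monoid.isComLaw.Build R 0 Rplus (fun a b c => esym (Rplus_assoc a b c)) Rplus_comm Rplus_0_l.
Lemma vsum_recr n (f : 'I_n.+1 -> R) : vsum f = vsum (fun i : 'I_n => f (widen_ord (leqnSn n) i)) + f ord_max.
Proof. by rewrite /vsum big_ord_recr. Qed.
Lemma vsum0 (f : 'I_0 -> R) : vsum f = 0.
Proof. by rewrite /vsum big_ord0. Qed.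
Lemma vsumD1 n (f : 'I_n -> R) i : vsum f = f i + \big[Rplus/0]_(j < n | j != i) f j.
Proof. by rewrite /vsum (bigD1 i). Qed.
Lemma vsum_exch n m (f : 'I_n -> 'I_m -> R) : vsum (fun i => vsum (fun j => f i j)) = vsum (fun j => vsum (fun i => f i j)).
Proof. rewrite /vsum. exact: exchange_big. Qed.
Lemma vsum_ext n (f g : 'I_n -> R) : (forall i, f i = g i) -> vsum f = vsum g.
Proof. move=> H; rewrite /vsum; apply: eq_bigr => i _; exact: H. Qed.
Lemma vsum_add n (f g : 'I_n -> R) : vsum (fun i => f i + g i) = vsum f + vsum g.
Proof. by rewrite /vsum big_split. Qed.
Lemma vsum_scal n (f : 'I_n -> R) c : vsum (fun i => c * f i) = c * vsum f.
Proof. elim: n f => [|n IH] f; first by rewrite !vsum0; ring.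
rewrite !vsum_recr IH; ring. Qed.
Lemma vsum_scalr n (f : 'I_n -> R) c : vsum (fun i => f i * c) = vsum f * c.
Proof. rewrite (@vsum_ext _ _ (fun i => c * f i)); last by move=> i; ring.
rewrite vsum_scal; ring. Qed.
Lemma vsum_sub n (f g : 'I_n -> R) : vsum (fun i => f i - g i) = vsum f - vsum g.
Proof. elim: n f g => [|n IH] f g; first by rewrite !vsum0; ring.
rewrite !vsum_recr IH; ring. Qed.
Lemma vsum_le n (f g : 'I_n -> R) : (forall i, f i <= g i) -> vsum f <= vsum g.
Proof. elim: n f g => [|n IH] f g H; first by rewrite !vsum0; lra.
rewrite !vsum_recr. apply Rplus_le_compat; [apply IH => i|]; apply H. Qed.
Lemma vsum_abs n (f : 'I_n -> R) : Rabs (vsum f) <= vsum (fun i => Rabs (f i)).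
Proof. elim: n f => [|n IH] f; first by rewrite !vsum0 Rabs_R0; lra.
rewrite !vsum_recr. eapply Rle_trans; first by apply Rabs_triang.
apply Rplus_le_compat_r; apply IH. Qed.
Lemma vsum_const n c : vsum (fun _ : 'I_n => c) = INR n * c.
Proof. elim: n => [|n IH]; first by rewrite vsum0 /=; ring.
rewrite vsum_recr IH S_INR; ring. Qed.
Lemma vsum_ge0 n (f : 'I_n -> R) : (forall i, 0 <= f i) -> 0 <= vsum f.
Proof. move=> H; rewrite -(vsum0 (fun _ => 0)).
elim: n f H => [|n IH] f H; first by rewrite !vsum0; lra.
rewrite vsum0 vsum_recr. have := IH (fun i => f (widen_ord (leqnSn n) i)) (fun i => H _).
rewrite vsum0. have := H ord_max. lra. Qed.
Lemma vsum_term n (f : 'I_n -> R) i : (forall i, 0 <= f i) -> f i <= vsum f.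
Proof. move=> H; rewrite (@vsumD1 _ f i).
have : 0 <= \big[Rplus/0]_(j < n | j != i) f j.
  apply: (big_ind (fun x => 0 <= x)) => //; [lra| move=> x y; lra].
lra. Qed.
Lemma vnorm_ge0 n (x : vec n) : 0 <= vnorm x.
Proof. apply sqrt_pos. Qed.
Lemma coord_le_vnorm n (x : vec n) i : Rabs (x i) <= vnorm x.
Proof. rewrite -sqrt_Rsqr_abs /vnorm /dot /Rsqr. apply sqrt_le_1_alt.
apply: (@vsum_term _ (fun i => x i * x i)) => j. apply Rle_0_sqr. Qed.
Lemma sumsq_le n (f : 'I_n -> R) : vsum (fun i => f i * f i) <= (vsum (fun i => Rabs (f i)))^2.
Proof. elim: n f => [|n IH] f; first by rewrite !vsum0; lra.
rewrite !vsum_recr. have := IH (fun i => f (widen_ord (leqnSn n) i)).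
have := @vsum_ge0 _ (fun i => Rabs (f (widen_ord (leqnSn n) i))) (fun i => Rabs_pos _).
have := Rabs_pos (f ord_max). have : Rabs (f ord_max) * Rabs (f ord_max) = f ord_max * f ord_max.
  rewrite -Rabs_mult Rabs_pos_eq //; apply Rle_0_sqr.
nra. Qed.
Lemma vnorm_le_sum n (x : vec n) : vnorm x <= vsum (fun i => Rabs (x i)).
Proof. have H0 := @vsum_ge0 _ (fun i => Rabs (x i)) (fun i => Rabs_pos _).
rewrite /vnorm /dot. rewrite -(sqrt_pow2 (vsum _) H0). apply sqrt_le_1_alt. apply sumsq_le. Qed.
Lemma dot_bound n (d h : vec n) : Rabs (dot d h) <= vsum (fun i => Rabs (d i)) * vnorm h.
Proof. rewrite /dot -vsum_scalr. eapply Rle_trans; first by apply vsum_abs.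
apply vsum_le => i. rewrite Rabs_mult. apply Rmult_le_compat_l; first by apply Rabs_pos.
apply coord_le_vnorm. Qed.
Lemma dot_sub n (x y h : vec n) : dot x h - dot y h = dot (fun i => x i - y i) h.
Proof. rewrite /dot -vsum_sub; apply vsum_ext => i; ring. Qed.
Lemma vsub_vadd n (u h : vec n) : vsub (vadd u h) u = h.
Proof. apply functional_extensionality => i; rewrite /vsub /vadd; ring. Qed.
Lemma vadd_vsub n (u v : vec n) : vadd u (vsub v u) = v.
Proof. apply functional_extensionality => i; rewrite /vsub /vadd; ring. Qed.
Lemma simplex_le1 k (a : vec k) j : in_simplex a -> 0 <= a j <= 1.
Proof. move=> [H1 H2]; split => //; rewrite -H2; apply: vsum_term H1. Qed.
Lemma cvx_bound k (a : vec k) (c : 'I_k -> R) M : in_simplex a -> (forall j, Rabs (c j) <= M) ->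
  Rabs (vsum (fun j => c j * a j)) <= M.
Proof. move=> [H1 H2] Hc. eapply Rle_trans; first by apply vsum_abs.
rewrite -(Rmult_1_r M) -H2 -vsum_scal. apply vsum_le => j.
rewrite Rabs_mult (Rabs_pos_eq (a j)) //. apply Rmult_le_compat_r => //. Qed.
Lemma finmin (I : finType) (P : I -> R -> Prop) :
  (forall x d d', 0 < d' <= d -> P x d -> P x d') ->
  (forall x, exists d, 0 < d /\ P x d) -> exists d, 0 < d /\ forall x, P x d.
Proof. move=> Hm H.
suff: forall s : seq I, exists d, 0 < d /\ forall x, x \in s -> P x d.
  case/(_ (enum I)) => d [Hd Hs]; exists d; split => // x; apply Hs; by rewrite mem_enum.
elim => [|y s [d [Hd Hs]]]; first by exists 1; split => //; lra.
case: (H y) => d' [Hd' Hy]. exists (Rmin d d'); split; first by apply Rmin_pos.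
move=> x; rewrite in_cons; case/orP => [/eqP ->|Hx].
  apply: (Hm _ d'); last by []. split; [apply Rmin_pos => //|apply Rmin_r].
apply: (Hm _ d); last by apply Hs. split; [apply Rmin_pos => //|apply Rmin_l]. Qed.
Lemma finbound (I : finType) (f : I -> R) : exists B, 0 <= B /\ forall x, f x <= B.
Proof.
suff: forall s : seq I, exists B, 0 <= B /\ forall x, x \in s -> f x <= B.
  case/(_ (enum I)) => d [Hd Hs]; exists d; split => // x; apply Hs; by rewrite mem_enum.
elim => [|y s [d [Hd Hs]]]; first by exists 0; split => //; lra.
exists (Rmax d (f y)); split; first by eapply Rle_trans; [apply Hd|apply Rmax_l].
move=> x; rewrite in_cons; case/orP => [/eqP ->|Hx]; first by apply Rmax_r.
eapply Rle_trans; [apply Hs => //|apply Rmax_l]. Qed.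
Definition CA n (P : vec n -> Prop) (F : vec n -> R) (u0 : vec n) :=
  forall e, 0 < e -> exists d, 0 < d /\ forall v, P v -> vnorm (vsub v u0) < d -> Rabs (F v - F u0) < e.
Arguments CA {n}.
Lemma CA_const n (P : vec n -> Prop) (u0 : vec n) c : CA P (fun _ => c) u0.
Proof. move=> e He; exists 1; split; [lra|] => v _ _; rewrite Rminus_diag Rabs_R0 //. Qed.
Lemma CA_ext n (P : vec n -> Prop) (F G : vec n -> R) u0 : (forall v, F v = G v) -> CA P F u0 -> CA P G u0.
Proof. move=> E H e He; case: (H e He) => d [Hd Hv]; exists d; split => // v Pv Hn; rewrite -!E; auto. Qed.
Lemma CA_dom n (P Q : vec n -> Prop) F u0 : (forall v, Q v -> P v) -> CA P F u0 -> CA Q F u0.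
Proof. move=> E H e He; case: (H e He) => d [Hd Hv]; exists d; split => // v Pv Hn; auto. Qed.
Lemma CA_add n (P : vec n -> Prop) (F G : vec n -> R) u0 : CA P F u0 -> CA P G u0 -> CA P (fun v => F v + G v) u0.
Proof. move=> HF HG e He.
case: (HF (e/2)) => [|d1 [Hd1 H1]]; first lra. case: (HG (e/2)) => [|d2 [Hd2 H2]]; first lra.
exists (Rmin d1 d2); split; first by apply Rmin_pos.
move=> v Pv Hn. have := H1 v Pv (Rlt_le_trans _ _ _ Hn (Rmin_l _ _)).
have := H2 v Pv (Rlt_le_trans _ _ _ Hn (Rmin_r _ _)).
have := Rabs_triang (F v - F u0) (G v - G u0).
have -> : F v + G v - (F u0 + G u0) = F v - F u0 + (G v - G u0) by ring. lra. Qed.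
Lemma CA_mul n (P : vec n -> Prop) (F G : vec n -> R) u0 : CA P F u0 -> CA P G u0 -> CA P (fun v => F v * G v) u0.
Proof. move=> HF HG e He.
set M := Rabs (F u0) + Rabs (G u0) + 1.
have HM : 0 < M by have := Rabs_pos (F u0); have := Rabs_pos (G u0); rewrite /M; lra.
set e' := Rmin 1 (e / (2 * M)).
have He' : 0 < e' by apply Rmin_pos; [lra| apply Rdiv_lt_0_compat; lra].
have He'M : e' * M <= e / 2.
  have : e' <= e / (2 * M) by apply Rmin_r.
  move=> h; have := Rmult_le_compat_r M _ _ (Rlt_le _ _ HM) h.
  have -> : e / (2 * M) * M = e / 2 by field; lra. done.
have He'1 : e' <= 1 by apply Rmin_l.
case: (HF e' He') => d1 [Hd1 H1]. case: (HG e' He') => d2 [Hd2 H2].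
exists (Rmin d1 d2); split; first by apply Rmin_pos.
move=> v Pv Hn. have Ha := H1 v Pv (Rlt_le_trans _ _ _ Hn (Rmin_l _ _)).
have Hb := H2 v Pv (Rlt_le_trans _ _ _ Hn (Rmin_r _ _)).
have -> : F v * G v - F u0 * G u0 = (F v - F u0) * (G v - G u0) + (F v - F u0) * G u0 + F u0 * (G v - G u0) by ring.
set a := F v - F u0 in Ha *. set b := G v - G u0 in Hb *.
have T1 := Rabs_triang (a * b + a * G u0) (F u0 * b).
have T2 := Rabs_triang (a * b) (a * G u0).
rewrite !Rabs_mult in T1 T2.
have := Rabs_pos a; have := Rabs_pos b; have := Rabs_pos (F u0); have := Rabs_pos (G u0).
rewrite /M in He'M. nra. Qed.
Lemma CA_sum n (P : vec n -> Prop) m (F : 'I_m -> vec n -> R) u0 : (forall i, CA P (F i) u0) -> CA P (fun v => vsum (fun i => F i v)) u0.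
Proof. elim: m F => [|m IH] F H.
  apply: (@CA_ext _ _ (fun _ => 0)); last by apply CA_const. by move=> v; rewrite vsum0.
apply: (@CA_ext _ _ (fun v => vsum (fun i : 'I_m => F (widen_ord (leqnSn m) i) v) + F ord_max v)).
  by move=> v; rewrite vsum_recr.
apply CA_add; [apply IH => i|]; apply H. Qed.
Lemma CA_abs n (P : vec n -> Prop) (F : vec n -> R) u0 : CA P F u0 -> CA P (fun v => Rabs (F v)) u0.
Proof. move=> H e He; case: (H e He) => d [Hd Hv]; exists d; split => // v Pv Hn.
eapply Rle_lt_trans; [apply Rabs_triang_inv2|auto]. Qed.
Lemma grad_CA n (P : vec n -> Prop) (g : vec n -> R) u d : has_grad g u d -> CA P g u.
Proof. move=> H e He. case: (H 1 Rlt_0_1) => d1 [Hd1 H1].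
set C := vsum (fun i => Rabs (d i)) + 1.
have HC : 0 < C by have := @vsum_ge0 _ (fun i => Rabs (d i)) (fun i => Rabs_pos _); rewrite /C; lra.
exists (Rmin d1 (e / C)); split; first by apply Rmin_pos => //; apply Rdiv_lt_0_compat.
move=> v _ Hn. set h := vsub v u in Hn. have Hv : v = vadd u h by rewrite vadd_vsub.
have := H1 h (Rlt_le_trans _ _ _ Hn (Rmin_l _ _)). rewrite -Hv => Hg.
have Hh : vnorm h < e / C by apply: (Rlt_le_trans _ _ _ Hn (Rmin_r _ _)).
have HhC : C * vnorm h < e.
  have := Rmult_lt_compat_l C _ _ HC Hh. have -> : C * (e / C) = e by field; lra. done.
have := dot_bound _ d h. have := Rabs_triang (g v - g u - dot d h) (dot d h).
have -> : g v - g u - dot d h + dot d h = g v - g u by ring.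
rewrite /C in HhC. have := vnorm_ge0 _ h. nra. Qed.

Lemma Un_cv_ext (u w : nat -> R) l : (forall m, u m = w m) -> Un_cv u l -> Un_cv w l.
Proof. move=> E H e He; case: (H e He) => N HN; exists N => m Hm; rewrite -E; auto. Qed.
Lemma CV_const c : Un_cv (fun _ => c) c.
Proof. move=> e He; exists O => m _; rewrite /Rdist Rminus_diag Rabs_R0; lra. Qed.
Lemma CV_sum m (F : 'I_m -> nat -> R) L : (forall i, Un_cv (F i) (L i)) ->
  Un_cv (fun p => vsum (fun i => F i p)) (vsum L).
Proof. elim: m F L => [|m IH] F L H.
  rewrite vsum0; apply: (@Un_cv_ext (fun _ => 0)); last by apply CV_const. by move=> p; rewrite vsum0.
rewrite vsum_recr. apply: (@Un_cv_ext (fun p => vsum (fun i : 'I_m => F (widen_ord (leqnSn m) i) p) + F ord_max p)).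
  by move=> p; rewrite vsum_recr.
apply CV_plus; [apply IH => i|]; apply H. Qed.
Lemma CV_ge0 (u : nat -> R) l : (forall m, 0 <= u m) -> Un_cv u l -> 0 <= l.
Proof. move=> H Hc. apply Rnot_lt_le => Hl. case: (Hc (- l)) => [|N HN]; first lra.
have := HN N (le_n N). have := H N. rewrite /Rdist. move=> h1 h2.
have := Rle_abs (u N - l). have := Rabs_minus_sym (u N) l. lra. Qed.
Lemma CV_le (u w : nat -> R) l1 l2 : (forall m, u m <= w m) -> Un_cv u l1 -> Un_cv w l2 -> l1 <= l2.
Proof. move=> H H1 H2. have := @CV_ge0 (fun m => w m - u m) (l2 - l1).
move=> h; have : 0 <= l2 - l1 by apply h; [move=> m; have := H m; lra| apply CV_minus]. lra. Qed.
Lemma incr_ge (psi : nat -> nat) : (forall m, (psi m < psi (S m))%nat) -> forall m, (m <= psi m)%nat.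
Proof. move=> H; elim => [|m IH]; [lia|]; have := H m; lia. Qed.
Lemma incr_mono (psi : nat -> nat) : (forall m, (psi m < psi (S m))%nat) -> forall a b, (a <= b)%nat -> (psi a <= psi b)%nat.
Proof. move=> H a b Hab; elim: b Hab => [|b IH] Hab.
  by have -> : a = O by lia.
case: (Nat.eq_dec a (S b)) => [->|Hne]; first lia. have := H b; have := IH ltac:(lia); lia. Qed.
Lemma CV_subseq (u : nat -> R) l psi : (forall m, (psi m < psi (S m))%nat) -> Un_cv u l -> Un_cv (fun m => u (psi m)) l.
Proof. move=> Hp H e He; case: (H e He) => N HN; exists N => m Hm; apply HN.
have := incr_ge _ Hp m; lia. Qed.
Lemma extract1 (u : nat -> R) l : ValAdh u l -> exists psi, (forall m, (psi m < psi (S m))%nat) /\ Un_cv (fun m => u (psi m)) l.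
Proof. move=> H.
have H1 : forall m N, exists p, (N <= p)%nat /\ Rabs (u p - l) < / INR (S m).
  move=> m N. have Hp : 0 < / INR (S m) by apply Rinv_0_lt_compat; apply lt_0_INR; lia.
  case: (H (disc l (mkposreal _ Hp)) N) => [|p [Hp1 Hp2]]; last by exists p; split => //; lia.
  exists (mkposreal _ Hp) => y; done.
have [c Hc] : exists c : nat -> nat -> nat, forall m N, (N <= c m N)%nat /\ Rabs (u (c m N) - l) < / INR (S m).
  have := choice (fun (mN : nat * nat) p => (mN.2 <= p)%nat /\ Rabs (u p - l) < / INR (S mN.1)).
  case => [[m N]|f Hf]; first by apply H1.
  exists (fun m N => f (m, N)) => m N; apply (Hf (m, N)).
pose psi := fix psi m := match m with O => c O O | S m' => c m (S (psi m')) end.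
exists psi; split; first by move=> m; have := (Hc (S m) (S (psi m))).1; simpl; lia.
move=> e He. case: (archimed_cor1 e He) => N [HN HN0]. exists N => m Hm.
rewrite /Rdist. have Hm' : Rabs (u (psi m) - l) < / INR (S m) by case: m {Hm} => [|m] /=; apply Hc.
eapply Rlt_le_trans; first exact Hm'. eapply Rle_trans; last by apply Rlt_le, HN.
apply Rinv_le_contravar; [apply lt_0_INR; lia| apply le_INR; lia]. Qed.
Lemma extractk k (x : nat -> vec k) : (forall m j, 0 <= x m j <= 1) ->
  exists (phi : nat -> nat) (beta : vec k), (forall m, (phi m < phi (S m))%nat) /\
    forall j, Un_cv (fun m => x (phi m) j) (beta j).
Proof. move=> Hx.
suff: forall s : seq 'I_k, exists (phi : nat -> nat) (beta : vec k), (forall m, (phi m < phi (S m))%nat) /\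
    forall j, j \in s -> Un_cv (fun m => x (phi m) j) (beta j).
  case/(_ (enum 'I_k)) => phi [beta [H1 H2]]; exists phi, beta; split => // j; apply H2; by rewrite mem_enum.
elim => [|j0 s [phi [beta [Hphi Hs]]]].
  exists (fun m => m), (fun _ => 0); split => // m; lia.
have [l Hl] := Bolzano_Weierstrass (fun m => x (phi m) j0) _ (compact_P3 0 1) (fun m => Hx _ _).
have [psi [Hpsi Hc]] := extract1 _ _ Hl.
exists (fun m => phi (psi m)), (fun j => if j == j0 then l else beta j). split.
  move=> m. have := Hphi (psi m). have := incr_mono _ Hphi (S (psi m)) (psi (S m)).
  have := Hpsi m. lia.
move=> j; rewrite in_cons; case: (eqVneq j j0) => [->|Hne] /=.
  move=> _; exact Hc.
move=> Hj. exact: (CV_subseq (fun m => x (phi m) j) _ _ Hpsi (Hs j Hj)). Qed.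
Definition sv n k (DJ : vec n -> 'I_k -> 'I_n -> R) (u : vec n) (a : vec k) (i : 'I_n) : R :=
  vsum (fun j => DJ u j i * a j).
Arguments sv {n k}.
Lemma CV_sq (u : nat -> R) l : Un_cv u l -> Un_cv (fun m => u m ^ 2) (l ^ 2).
Proof. move=> H. have -> : l ^ 2 = l * l by ring.
apply: (@Un_cv_ext (fun m => u m * u m)); first by move=> m; ring. by apply CV_mult. Qed.
Lemma omega_cv n k DJ (eps : vec k) (w : nat -> vec n) u0 (y : nat -> vec k) beta :
  (forall j i, Un_cv (fun m => DJ (w m) j i) (DJ u0 j i)) -> (forall j, Un_cv (fun m => y m j) (beta j)) ->
  Un_cv (fun m => omega DJ eps (w m) (y m)) (omega DJ eps u0 beta).
Proof. move=> HD Hy. rewrite /omega. apply CV_minus; last first.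
  apply CV_sq; rewrite /dot; apply CV_sum => j; apply CV_mult => //; apply CV_const.
apply CV_sum => i; apply CV_sq; apply CV_sum => j; apply CV_mult => //. Qed.
Lemma CA_seq n (P : vec n -> Prop) (F : vec n -> R) u0 (w : nat -> vec n) : CA P F u0 -> (forall m, P (w m)) ->
  Un_cv (fun m => vnorm (vsub (w m) u0)) 0 -> Un_cv (fun m => F (w m)) (F u0).
Proof. move=> H Pw Hw e He. case: (H e He) => d [Hd Hv]. case: (Hw d Hd) => N HN.
exists N => m Hm. rewrite /Rdist. apply Hv => //. have := HN m Hm. rewrite /Rdist Rminus_0_r.
have := Rle_abs (vnorm (vsub (w m) u0)). lra. Qed.

Lemma contA n k DJ (eps : vec k) (B : vec n -> Prop) (A : vec n -> vec k) u0 :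
  (forall j i, CA B (fun v => DJ v j i) u0) ->
  (forall u, B u -> is_solution DJ eps u (A u)) ->
  (forall b, is_solution DJ eps u0 b -> forall j, b j = A u0 j) -> B u0 ->
  forall j, CA B (fun v => A v j) u0.
Proof. move=> HD HA Hun Bu0 j e He. apply NNPP => Hne.
have Hall : forall d, 0 < d -> exists v, B v /\ vnorm (vsub v u0) < d /\ e <= Rabs (A v j - A u0 j).
  move=> d Hd; apply NNPP => H2; apply Hne; exists d; split => // v Bv Hn.
  apply Rnot_le_lt => Hle; apply H2; exists v; auto.
have Hpos : forall m : nat, 0 < / INR (S m) by move=> m; apply Rinv_0_lt_compat; apply lt_0_INR; lia.
have [w Hw] := choice (fun m v => B v /\ vnorm (vsub v u0) < / INR (S m) /\ e <= Rabs (A v j - A u0 j))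
   (fun m => Hall _ (Hpos m)).
have Hx : forall m j', 0 <= A (w m) j' <= 1.
  move=> m j'; apply simplex_le1; exact: (HA _ (Hw m).1).1.
have [phi [beta [Hphi Hcv]]] := extractk _ (fun m => A (w m)) Hx.
have Hdist : Un_cv (fun m => vnorm (vsub (w (phi m)) u0)) 0.
  move=> e' He'. case: (archimed_cor1 e' He') => N [HN HN0]. exists N => m Hm.
  rewrite /Rdist Rminus_0_r Rabs_pos_eq; last by apply vnorm_ge0.
  eapply Rlt_trans; first by apply (Hw (phi m)).2.1.
  eapply Rle_lt_trans; last by apply HN.
  apply Rinv_le_contravar; [apply lt_0_INR; lia| apply le_INR]. have := incr_ge _ Hphi m. lia.
have HDcv : forall j' i, Un_cv (fun m => DJ (w (phi m)) j' i) (DJ u0 j' i).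
  move=> j' i; apply: (@CA_seq _ B (fun v => DJ v j' i) u0 (fun m => w (phi m)) (HD j' i) _ Hdist). move=> m; exact (Hw (phi m)).1.
have Hsb : in_simplex beta.
  split.
    move=> i; apply: (CV_ge0 _ _ _ (Hcv i)) => m. exact: ((HA _ (Hw (phi m)).1).1.1 i).
  apply: (UL_sequence (fun m => vsum (A (w (phi m))))); first by apply CV_sum.
  apply: (@Un_cv_ext (fun _ => 1)); last by apply CV_const.
  move=> m; symmetry; exact: (HA _ (Hw (phi m)).1).1.2.
have Hsol : is_solution DJ eps u0 beta.
  split => // b Hb.
  apply: (CV_le (fun m => omega DJ eps (w (phi m)) (A (w (phi m)))) (fun m => omega DJ eps (w (phi m)) b)).
  - move=> m; apply (HA _ (Hw (phi m)).1).2 => //.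
  - by apply omega_cv.
  - apply omega_cv => // j'; apply CV_const.
have Hb := Hun _ Hsol j. have := Hcv j. rewrite Hb => Hc.
case: (Hc e He) => N HN. have := HN N (le_n N). have := (Hw (phi N)).2.2. rewrite /Rdist. lra. Qed.
Lemma scal_bound s L E x S B eta e' : 0 <= x -> 0 <= S -> 0 <= B -> Rabs s <= S -> Rabs L <= B*x ->
  Rabs E <= eta*x -> 0 <= eta <= 1 -> 2*S*eta <= e'/2 -> (B+1)^2 * x <= e'/2 ->
  Rabs ((s+L+E)^2 - s^2 - 2*s*L) <= e' * x.
Proof. move=> Hx HS HB Hs HL HE Heta H1 H2.
have -> : (s+L+E)^2 - s^2 - 2*s*L = 2*s*E + (L+E)^2 by ring.
eapply Rle_trans; first by apply Rabs_triang.
have T1 : Rabs (2*s*E) <= 2*S*eta*x.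
  rewrite !Rabs_mult Rabs_pos_eq; last lra.
  have := Rabs_pos s; have := Rabs_pos E. nra.
have T2 : Rabs ((L+E)^2) <= e'/2 * x.
  rewrite Rabs_pos_eq; last by apply pow2_ge_0.
  have HLE : Rabs (L+E) <= (B+1)*x.
    eapply Rle_trans; first by apply Rabs_triang. nra.
  have : (L+E)^2 <= ((B+1)*x)^2.
    rewrite -(pow2_abs (L+E)). apply pow_incr; split => //; apply Rabs_pos.
  have : ((B+1)*x)^2 <= e'/2 * x.
    have -> : ((B+1)*x)^2 = ((B+1)^2 * x) * x by ring. apply Rmult_le_compat_r => //.
  lra.
have : 2*S*eta*x <= e'/2*x by apply Rmult_le_compat_r.
lra. Qed.

Definition Gd n k (DJ : vec n -> 'I_k -> 'I_n -> R) (dD : 'I_k -> 'I_n -> vec n -> vec n)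
  (u : vec n) (a : vec k) : vec n :=
  fun l => vsum (fun i => 2 * sv DJ u a i * vsum (fun j => a j * dD j i u l)).
Arguments Gd {n k}.

Lemma Gd_dot n k DJ dD (u : vec n) (a : vec k) h :
  dot (Gd DJ dD u a) h = vsum (fun i => 2 * sv DJ u a i * vsum (fun j => a j * dot (dD j i u) h)).
Proof. rewrite /dot /Gd.
rewrite (@vsum_ext _ _ (fun l => vsum (fun i => 2 * sv DJ u a i * vsum (fun j => a j * dD j i u l) * h l))); last first.
  by move=> l; rewrite vsum_scalr.
rewrite vsum_exch. apply vsum_ext => i.
rewrite (@vsum_ext _ _ (fun l => (2 * sv DJ u a i) * vsum (fun j => a j * dD j i u l * h l))); last first.
  move=> l; rewrite Rmult_assoc -vsum_scalr; done.
rewrite vsum_scal; congr (_ * _). rewrite vsum_exch. apply vsum_ext => j.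
rewrite -vsum_scal; apply vsum_ext => l; ring. Qed.
Lemma UD n k DJ (eps : vec k) dD (u0 : vec n) :
  (forall j i, has_grad (fun v => DJ v j i) u0 (dD j i u0)) ->
  forall e, 0 < e -> exists d, 0 < d /\ forall h, vnorm h < d -> forall a, in_simplex a ->
   Rabs (omega DJ eps (vadd u0 h) a - omega DJ eps u0 a - dot (Gd DJ dD u0 a) h) <= e * vnorm h.
Proof. move=> Hg e He.
have Hn0 := pos_INR n.
set e' := e / (INR n + 1). have He' : 0 < e' by apply Rdiv_lt_0_compat; lra.
have [S [HS0 HS]] := finbound _ (fun p : 'I_k * 'I_n => Rabs (DJ u0 p.1 p.2)).
have [B [HB0 HB]] := finbound _ (fun p : 'I_k * 'I_n => vsum (fun l => Rabs (dD p.1 p.2 u0 l))).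
set q := e' / (4 * (S+1)). have Hq : q * (4 * (S+1)) = e' by rewrite /q; field; lra.
have Hq0 : 0 < q by apply Rdiv_lt_0_compat; lra.
set eta := Rmin 1 q.
have Heta0 : 0 < eta by apply Rmin_pos; lra.
have Heta1 : eta <= 1 by apply Rmin_l.
have Hetaq : eta <= q by apply Rmin_r.
have Heta2 : 2 * S * eta <= e' / 2 by nra.
have [d1 [Hd1 H1]] := finmin _ (fun p d => forall h, vnorm h < d ->
   Rabs (DJ (vadd u0 h) p.1 p.2 - DJ u0 p.1 p.2 - dot (dD p.1 p.2 u0) h) <= eta * vnorm h)
  (fun p d d' Hd H h Hh => H h ltac:(lra))
  (fun p => Hg p.1 p.2 eta Heta0).
set d2 := e' / (2 * (B+1)^2).
have HB1 : 0 < (B+1)^2 by apply pow_lt; lra.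
have Hd2 : 0 < d2 by apply Rdiv_lt_0_compat; lra.
have Hd2' : (B+1)^2 * d2 = e'/2 by rewrite /d2; field; lra.
exists (Rmin d1 d2); split; first by apply Rmin_pos.
move=> h Hh a Ha.
have Hh1 : vnorm h < d1 by apply: (Rlt_le_trans _ _ _ Hh (Rmin_l _ _)).
have Hh2 : vnorm h < d2 by apply: (Rlt_le_trans _ _ _ Hh (Rmin_r _ _)).
have Hx := vnorm_ge0 _ h.
set L := fun i => vsum (fun j => a j * dot (dD j i u0) h).
set Ee := fun i => sv DJ (vadd u0 h) a i - sv DJ u0 a i - L i.
rewrite Gd_dot -/L.
have -> : omega DJ eps (vadd u0 h) a - omega DJ eps u0 a - vsum (fun i => 2 * sv DJ u0 a i * L i) =
   vsum (fun i => (sv DJ u0 a i + L i + Ee i)^2 - (sv DJ u0 a i)^2 - 2 * sv DJ u0 a i * L i).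
  have E1 : vsum (fun i => (sv DJ u0 a i + L i + Ee i)^2 - (sv DJ u0 a i)^2 - 2 * sv DJ u0 a i * L i) =
     vsum (fun i => (sv DJ (vadd u0 h) a i)^2 - (sv DJ u0 a i)^2 - 2 * sv DJ u0 a i * L i).
    by apply vsum_ext => i; rewrite /Ee; ring.
  rewrite E1 vsum_sub vsum_sub /omega /sv. ring.
eapply Rle_trans; first by apply vsum_abs.
eapply Rle_trans; first apply: (@vsum_le _ _ (fun _ => e' * vnorm h)).
  move=> i. apply: (scal_bound _ _ _ _ S B eta) => //; try lra.
  - rewrite /sv; apply cvx_bound => // j; apply (HS (j, i)).
  - rewrite /L (@vsum_ext _ _ (fun j => dot (dD j i u0) h * a j)); last by move=> j; ring.
    apply cvx_bound => // j. eapply Rle_trans; first by apply dot_bound.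
    apply Rmult_le_compat_r => //; apply (HB (j, i)).
  - rewrite /Ee /L /sv -!vsum_sub.
    rewrite (@vsum_ext _ _ (fun j => (DJ (vadd u0 h) j i - DJ u0 j i - dot (dD j i u0) h) * a j)); last by move=> j; ring.
    apply cvx_bound => // j. exact: (H1 (j, i) h Hh1).
  - have := Rmult_le_compat_l ((B+1)^2) _ _ (Rlt_le _ _ HB1) (Rlt_le _ _ Hh2). lra.
rewrite vsum_const.
have -> : INR n * (e' * vnorm h) = (INR n / (INR n + 1)) * (e * vnorm h) by rewrite /e'; field; lra.
have : INR n / (INR n + 1) <= 1.
  apply (Rmult_le_reg_r (INR n + 1)); first lra. rewrite Rmult_1_l /Rdiv Rmult_assoc Rinv_l; lra.
have : 0 <= e * vnorm h by apply Rmult_le_pos; lra.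
nra. Qed.
Theorem mainTheorem5 (n k : nat) (J : vec n -> vec k) (DJ : vec n -> 'I_k -> 'I_n -> R)
  (eps : vec k) (ubar : vec n) (abar : vec k) :
  C2_with_jacobian J DJ ->
  (forall i, 0 <= eps i) ->
  phi DJ eps ubar = 0 ->
  is_solution DJ eps ubar abar ->
  (forall b, is_solution DJ eps ubar b -> forall i, b i = abar i) ->
  (forall i, 0 < abar i) ->
  (exists r, 0 < r /\ forall u, vnorm (vsub u ubar) < r -> uniquely_solvable DJ eps u) ->
  exists U : vec n -> Prop,
    is_open U /\ U ubar /\ C1_on U (phi DJ eps).
Proof.
move=> [Hjac HC1] Heps Hphi0 Hsol Huniq0 Hpos [r [Hr Hball]].
have [f Hf] := choice (fun (p : 'I_k * 'I_n) (dg : vec n -> vec n) =>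
   (forall u, has_grad (fun v => DJ v p.1 p.2) u (dg u)) /\ (forall l, continuous_on (@full n) (fun u => dg u l)))
  (fun p => match HC1 p.1 p.2 with ex_intro dg (conj H1 H2) => ex_intro _ dg (conj (fun u => H1 u I) H2) end).
pose dD := fun j i => f (j, i).
have HdG : forall j i u, has_grad (fun v => DJ v j i) u (dD j i u) by move=> j i u; exact: (Hf (j, i)).1.
have HdC : forall j i l, continuous_on (@full n) (fun u => dD j i u l) by move=> j i; exact: (Hf (j, i)).2.
pose B := fun v => vnorm (vsub v ubar) < r.
pose A := fun u => epsilon (inhabits (fun _ : 'I_k => 0)) (fun a => is_solution DJ eps u a).
have HA : forall u, B u -> is_solution DJ eps u (A u).
  move=> u Bu; apply epsilon_spec. case: (Hball u Bu) => a [Ha _]; by exists a.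
have HAu : forall u, B u -> forall b, is_solution DJ eps u b -> forall j, b j = A u j.
  move=> u Bu b Hb j. case: (Hball u Bu) => a [Ha Hu]. rewrite (Hu b Hb) (Hu (A u) (HA u Bu)) //.
have Hphi : forall u, B u -> phi DJ eps u = omega DJ eps u (A u).
  move=> u Bu. rewrite /phi.
  have [a [Ha Hom]] := epsilon_spec (inhabits 0) (is_min_value DJ eps u) (ex_intro _ _ (ex_intro _ (A u) (conj (HA u Bu) erefl))).
  rewrite -Hom. have -> : a = A u by apply functional_extensionality => j; apply HAu.
  done.
have HCD : forall P j i u0, CA P (fun v => DJ v j i) u0 by move=> P j i u0; apply: grad_CA; apply HdG.
have HCA : forall u0, B u0 -> forall j, CA B (fun v => A v j) u0.
  move=> u0 Bu0; exact: (contA n k DJ eps B A u0 (fun j i => HCD B j i u0) HA (HAu u0 Bu0) Bu0).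
have Hn0 := pos_INR n.
pose rho := r / (INR n + 1).
have Hrho : 0 < rho by apply Rdiv_lt_0_compat; lra.
pose U := fun v : vec n => forall i, Rabs (v i - ubar i) < rho.
have HUB : forall v, U v -> B v.
  move=> v Uv. rewrite /B. eapply Rle_lt_trans; first by apply vnorm_le_sum.
  eapply Rle_lt_trans; first by apply: (@vsum_le _ _ (fun _ => rho)) => i; apply Rlt_le, Uv.
  rewrite vsum_const /rho.
  have -> : INR n * (r / (INR n + 1)) = r - r / (INR n + 1) by field; lra.
  move: Hrho; rewrite /rho; lra.
have HUo : is_open U.
  move=> v Uv.
  have [d [Hd Hdv]] : exists d, 0 < d /\ forall i, d <= rho - Rabs (v i - ubar i).
    apply: (finmin _ (fun i d => d <= rho - Rabs (v i - ubar i))).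
      move=> i d d' H1 H2; lra.
    move=> i; exists (rho - Rabs (v i - ubar i)); split; last by apply Rle_refl.
    have := Uv i; lra.
  exists d; split => // w Hw i.
  have := coord_le_vnorm _ (vsub w v) i. rewrite /vsub => Hc.
  have := Rabs_triang (w i - v i) (v i - ubar i).
  have -> : w i - v i + (v i - ubar i) = w i - ubar i by ring.
  have := Hdv i. move: Hw; rewrite /vsub. lra.
exists U; split => //; split.
  move=> i; rewrite Rminus_diag Rabs_R0 //.
exists (fun u => Gd DJ dD u (A u)); split.
-
  move=> u0 Uu0 e He. have Bu0 := HUB _ Uu0.
  have [d1 [Hd1 HUD]] := UD n k DJ eps dD u0 (fun j i => HdG j i u0) (e/2) ltac:(lra).
  pose F := fun v => vsum (fun l => Rabs (Gd DJ dD u0 (A v) l - Gd DJ dD u0 (A u0) l)).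
  have HCF : CA B F u0.
    apply: CA_sum => l. apply: CA_abs.
    apply: (@CA_ext _ _ (fun v => Gd DJ dD u0 (A v) l + (-1) * Gd DJ dD u0 (A u0) l)); first by move=> v; ring.
    apply: CA_add; last by apply: CA_const.
    apply: CA_sum => i. apply: CA_mul; last first.
      apply: CA_sum => j. apply: CA_mul; [exact: HCA| exact: CA_const].
    apply: CA_mul; first exact: CA_const.
    apply: CA_sum => j. apply: CA_mul; [exact: CA_const| exact: HCA].
  have HF0 : F u0 = 0.
    rewrite /F (@vsum_ext _ _ (fun _ => 0)); last by move=> l; rewrite Rminus_diag Rabs_R0.
    rewrite vsum_const; ring.
  have [d2 [Hd2 HF]] := HCF (e/2) ltac:(lra).
  have [d3 [Hd3 HU3]] := HUo u0 Uu0.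
  exists (Rmin d1 (Rmin d2 d3)); split; first by repeat apply Rmin_pos.
  move=> h Hh.
  have Hh1 : vnorm h < d1 by apply: (Rlt_le_trans _ _ _ Hh (Rmin_l _ _)).
  have Hh2 : vnorm h < d2 by apply: (Rlt_le_trans _ _ _ Hh); eapply Rle_trans; [apply Rmin_r|apply Rmin_l].
  have Hh3 : vnorm h < d3 by apply: (Rlt_le_trans _ _ _ Hh); eapply Rle_trans; [apply Rmin_r|apply Rmin_r].
  set v := vadd u0 h.
  have Hvs : vsub v u0 = h by apply vsub_vadd.
  have Uv : U v by apply HU3; rewrite Hvs.
  have Bv := HUB _ Uv.
  rewrite (Hphi v Bv) (Hphi u0 Bu0).
  have a1 : omega DJ eps v (A v) <= omega DJ eps v (A u0) by apply (HA v Bv).2; exact (HA u0 Bu0).1.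
  have a2 : omega DJ eps u0 (A u0) <= omega DJ eps u0 (A v) by apply (HA u0 Bu0).2; exact (HA v Bv).1.
  have b1 := HUD h Hh1 (A u0) (HA u0 Bu0).1.
  have b2 := HUD h Hh1 (A v) (HA v Bv).1.
  have c : Rabs (dot (Gd DJ dD u0 (A v)) h - dot (Gd DJ dD u0 (A u0)) h) <= e/2 * vnorm h.
    rewrite dot_sub. eapply Rle_trans; first by apply dot_bound.
    apply Rmult_le_compat_r; first by apply vnorm_ge0.
    have := HF v Bv ltac:(rewrite Hvs; exact Hh2). rewrite HF0 Rminus_0_r /F.
    move=> H; have := Rle_abs (vsum (fun l => Rabs (Gd DJ dD u0 (A v) l - Gd DJ dD u0 (A u0) l))). lra.
  rewrite -/v in b1 b2.
  apply Rabs_le.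
  have := Rle_abs (omega DJ eps v (A u0) - omega DJ eps u0 (A u0) - dot (Gd DJ dD u0 (A u0)) h).
  have := Rle_abs (-(omega DJ eps v (A v) - omega DJ eps u0 (A v) - dot (Gd DJ dD u0 (A v)) h)).
  have := Rle_abs (-(dot (Gd DJ dD u0 (A v)) h - dot (Gd DJ dD u0 (A u0)) h)).
  rewrite !Rabs_Ropp. lra.
-
  move=> l u0 Uu0. change (CA U (fun u => Gd DJ dD u (A u) l) u0).
  have Bu0 := HUB _ Uu0.
  have HAU : forall j, CA U (fun v => A v j) u0 by move=> j; apply: (CA_dom _ B U _ u0 HUB); apply HCA.
  apply: CA_sum => i. apply: CA_mul; last first.
    apply: CA_sum => j. apply: CA_mul; first exact: HAU.
    move=> e He; case: (HdC j i l u0 I e He) => d [Hd H]; exists d; split => // w _ Hw; exact: H.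
  apply: CA_mul; first exact: CA_const.
  apply: CA_sum => j. apply: CA_mul; [exact: HCD| exact: HAU].
Qed.
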